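(* Let $\mathbf k=(k_1,\ldots,k_r)\in\mathbb N^r$, $\mathbf x=(x_1,\ldots,x_r)$ with $|x_j|\le1$, $l\in\mathbb N_0$ and $n\in\mathbb N$. Then \[ \sum_{n\ge n_1>\cdots>n_r>0}\prod_{j=1}^r\frac{x_j^{n_j+l}}{(n_j+l)^{k_j}}=(-1)^r\sum_{j=0}^r(-1)^j\,\zeta_{n+l}(k_1,\ldots,k_j;x_1,\ldots,x_j)\,\zeta^\star_l(k_r,k_{r-1},\ldots,k_{j+1};x_r,x_{r-1},\ldots,x_{j+1}). \]
   Context: $\zeta_n(\mathbf k;\mathbf x)=\sum_{n\ge n_1>\cdots>n_r\ge1}\prod_i x_i^{n_i}/n_i^{k_i}$ and $\zeta^\star_n(\mathbf k;\mathbf x)=\sum_{n\ge n_1\ge\cdots\ge n_r\ge1}\prod_i x_i^{n_i}/n_i^{k_i}$ for $n\in\mathbb N_0$; both equal $1$ for the empty index, and a sum over an empty range is $0$ (so e.g. $\zeta^\star_0$ of a nonempty index is $0$). *)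

(* Defs.v *)
From HB Require Import structures.
From mathcomp Require Import all_boot all_order all_algebra.
Set Implicit Arguments. Unset Strict Implicit. Unset Printing Implicit Defensive.
Import Order.TTheory GRing.Theory Num.Theory.
Local Open Scope ring_scope.

(* Summation variables n_1,...,n_r are encoded as m : 'I_r -> 'I_(n+1). *)

Definition mzeta (R : numFieldType) (n : nat) (k : seq nat) (x : seq R) : R :=
  \sum_(m : {ffun 'I_(size k) -> 'I_n.+1} |
          [forall i, (0 < (m i : nat))%N] &&
          [forall i : 'I_(size k), forall j : 'I_(size k), ((i : nat) < j)%N ==> ((m j : nat) < m i)%N])
    \prod_(i < size k) ((nth 0 x i) ^+ (m i) / ((m i : nat)%:R ^+ nth 0%N k i)).

Definition mzetaStar (R : numFieldType) (n : nat) (k : seq nat) (x : seq R) : R :=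
  \sum_(m : {ffun 'I_(size k) -> 'I_n.+1} |
          [forall i, (0 < (m i : nat))%N] &&
          [forall i : 'I_(size k), forall j : 'I_(size k), ((i : nat) < j)%N ==> ((m j : nat) <= m i)%N])
    \prod_(i < size k) ((nth 0 x i) ^+ (m i) / ((m i : nat)%:R ^+ nth 0%N k i)).

(* Main.v *)
Require Import Defs.
From HB Require Import structures.
From mathcomp Require Import all_boot all_order all_algebra.
From mathcomp Require Import ring zify.
Import Order.TTheory GRing.Theory Num.Theory.
Local Open Scope ring_scope.

Fixpoint zs {R : numFieldType} (s N r : nat) (F : nat -> nat -> R) : R :=
  match r with
  | 0 => 1
  | r'.+1 => \sum_(0 <= a < N) F 0%N (a.+1 + s)%N * zs s a r' (fun i => F i.+1)
  end.

Fixpoint zss {R : numFieldType} (N r : nat) (F : nat -> nat -> R) : R :=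
  match r with
  | 0 => 1
  | r'.+1 => \sum_(0 <= a < N) F 0%N a.+1 * zss a.+1 r' (fun i => F i.+1)
  end.

Lemma zs_ext {R : numFieldType} r : forall s N (F G : nat -> nat -> R),
  (forall i m, (i < r)%N -> F i m = G i m) -> zs s N r F = zs s N r G.
Proof.
elim: r => [//|r IH] s N F G H /=.
apply: eq_bigr => a _; rewrite H //; congr (_ * _); apply: IH => i m Hi; exact: H.
Qed.

Lemma zss_ext {R : numFieldType} r : forall N (F G : nat -> nat -> R),
  (forall i m, (i < r)%N -> F i m = G i m) -> zss N r F = zss N r G.
Proof.
elim: r => [//|r IH] N F G H /=.
apply: eq_bigr => a _; rewrite H //; congr (_ * _); apply: IH => i m Hi; exact: H.
Qed.

Lemma tri_sum {R : numFieldType} N (G : nat -> nat -> R) :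
  \sum_(0 <= a < N) \sum_(0 <= p < a) G a p =
  \sum_(0 <= p < N) \sum_(0 <= b < N - p.+1) G (b + p.+1)%N p.
Proof.
elim: N => [|N IH]; first by rewrite !big_geq.
rewrite big_nat_recr //= IH.
rewrite [in RHS]big_nat_recr //= subnn [X in _ = _ + X]big_geq // addr0.
rewrite -big_split /=; apply: eq_big_nat => p /andP[_ Hp].
rewrite subSS (_ : (N - p = (N - p.+1).+1)%N); last by lia.
rewrite big_nat_recr //= (_ : (N - p.+1 + p.+1 = N)%N) //; lia.
Qed.

Lemma zsS {R : numFieldType} s N r (F : nat -> nat -> R) :
  zs s N r.+1 F = \sum_(0 <= a < N) F 0%N (a.+1 + s)%N * zs s a r (fun i => F i.+1).
Proof. by []. Qed.

Lemma zssS {R : numFieldType} N r (F : nat -> nat -> R) :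
  zss N r.+1 F = \sum_(0 <= a < N) F 0%N a.+1 * zss a.+1 r (fun i => F i.+1).
Proof. by []. Qed.

Lemma zs_snoc {R : numFieldType} r : forall s N (F : nat -> nat -> R),
  zs s N r.+1 F = \sum_(0 <= p < N) F r (p.+1 + s)%N * zs (p.+1 + s) (N - p.+1) r F.
Proof.
elim: r => [|r IH] s N F.
  by rewrite /=; apply: eq_bigr => a _.
rewrite zsS.
under eq_bigr => a _ do rewrite IH mulr_sumr.
rewrite tri_sum; apply: eq_bigr => p _.
rewrite zsS mulr_sumr; apply: eq_bigr => b _.
rewrite addnK (_ : ((b + p.+1).+1 + s = b.+1 + (p.+1 + s))%N); last by lia.
by rewrite mulrCA.
Qed.

Lemma main_fun {R : numFieldType} r : forall (F : nat -> nat -> R) N l, (l <= N)%N ->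
  \sum_(j < r.+1) (-1) ^+ j * zs 0 N j F * zss l (r - j) (fun i => F (r - i.+1)%N)
  = (-1) ^+ r * zs l (N - l) r F.
Proof.
elim: r => [|r IH] F N l lN.
  by rewrite big_ord1 sub0n /= expr0 !mul1r.
rewrite big_ord_recr subnn.
have -> : nat_of_ord (@ord_max r.+1) = r.+1 by [].
rewrite (_ : zss l 0 _ = 1) // mulr1.
set T := zs 0 N r.+1 F; set U := zs l (N - l) r.+1 F; rewrite /=.
have H : forall j : 'I_r.+1,
   zss l (r.+1 - j) (fun i => F (r.+1 - i.+1)%N) =
   \sum_(0 <= p < l) F r p.+1 * zss p.+1 (r - j) (fun i => F (r - i.+1)%N).
  move=> j; rewrite subSn ?leq_ord // zssS.
  apply: eq_bigr => p _ /=; rewrite subSS subn0; congr (_ * _); apply: zss_ext => i m _.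
have E1 : \sum_(j < r.+1) (-1) ^+ j * zs 0 N j F *
   zss l (r.+1 - j) (fun i => F (r.+1 - i.+1)%N) =
   \sum_(0 <= p < l) F r p.+1 * ((-1) ^+ r * zs p.+1 (N - p.+1) r F).
  under eq_bigr => j _ do rewrite H mulr_sumr.
  rewrite exchange_big /=; apply: eq_big_nat => p /andP[_ pl].
  rewrite -(IH F N p.+1) ?(leq_trans pl lN) // mulr_sumr.
  by apply: eq_bigr => j _; rewrite mulrCA.
rewrite E1 /T /U zs_snoc (zs_snoc r l).
under [in X in _ + _ * X]eq_bigr => p _ do rewrite addn0.
have E3 : \sum_(0 <= p < N) F r p.+1 * zs p.+1 (N - p.+1) r F =
   \sum_(0 <= p < l) F r p.+1 * zs p.+1 (N - p.+1) r F +
   \sum_(0 <= p < N - l) F r (p.+1 + l)%N * zs (p.+1 + l) (N - l - p.+1) r F.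
  rewrite (big_cat_nat _ (n := l)) //=; congr (_ + _).
  rewrite -{1}(add0n l) big_addn; apply: eq_bigr => i _.
  rewrite addSn (_ : (N - (i + l).+1 = N - l - i.+1)%N) //; lia.
rewrite E3.
set Y := \sum_(0 <= p < N - l) _.
set X := \sum_(0 <= p < l) F r p.+1 * zs p.+1 (N - p.+1) r F.
have -> : \sum_(0 <= p < l) F r p.+1 * ((-1) ^+ r * zs p.+1 (N - p.+1) r F) = (-1) ^+ r * X.
  by rewrite /X mulr_sumr; apply: eq_bigr => p _; rewrite mulrCA.
rewrite exprS; ring.
Qed.
Definition fcons {T : Type} {r : nat} (a : T) (g : {ffun 'I_r -> T}) : {ffun 'I_r.+1 -> T} :=
  [ffun i => if unlift ord0 i is Some j then g j else a].

Lemma fcons0 {T : Type} {r : nat} (a : T) (g : {ffun 'I_r -> T}) : fcons a g ord0 = a.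
Proof. by rewrite ffunE unlift_none. Qed.

Lemma fconsS {T : Type} {r : nat} (a : T) (g : {ffun 'I_r -> T}) j : fcons a g (lift ord0 j) = g j.
Proof. by rewrite ffunE liftK. Qed.

Lemma sum_ffunS {R : numFieldType} (T : finType) r (G : {ffun 'I_r.+1 -> T} -> R) :
  \sum_(f : {ffun 'I_r.+1 -> T}) G f = \sum_(a : T) \sum_(g : {ffun 'I_r -> T}) G (fcons a g).
Proof.
rewrite pair_big /=.
rewrite (reindex (fun p : T * {ffun 'I_r -> T} => fcons p.1 p.2)) //=.
exists (fun f => (f ord0, [ffun j => f (lift ord0 j)])) => [[a g] _ | f _] /=.
- congr pair; first by rewrite fcons0.
  by apply/ffunP => j; rewrite ffunE fconsS.
- apply/ffunP => i; rewrite ffunE; case: unliftP => [j ->|->]; by rewrite ?ffunE.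
Qed.

Lemma cond_strict r N b (a : 'I_N.+1) (g : {ffun 'I_r -> 'I_N.+1}) :
  [forall i, (0 < (fcons a g i : nat))%N] &&
  [forall i : 'I_r.+1, forall j : 'I_r.+1, ((i : nat) < j)%N ==> ((fcons a g j : nat) < fcons a g i)%N] &&
  [forall i, ((fcons a g i : nat) <= b)%N]
  = ((0 < (a : nat))%N && (a <= b)%N) &&
   ([forall i, (0 < (g i : nat))%N] &&
    [forall i : 'I_r, forall j : 'I_r, ((i : nat) < j)%N ==> ((g j : nat) < g i)%N] &&
    [forall i, ((g i : nat) <= (a : nat).-1)%N]).
Proof.
apply/idP/idP.
- case/andP => /andP[/forallP Hp /forallP Hc] /forallP Hb.
  have Ha := Hp ord0; rewrite fcons0 in Ha.
  have Hab := Hb ord0; rewrite fcons0 in Hab.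
  rewrite Ha Hab /=; apply/andP; split; first (apply/andP; split).
  + by apply/forallP => j; have := Hp (lift ord0 j); rewrite fconsS.
  + apply/forallP => i; apply/forallP => j; apply/implyP => ij.
    have := Hc (lift ord0 i); move/forallP/(_ (lift ord0 j)).
    by rewrite !fconsS !lift0 ltnS ij.
  + apply/forallP => j; have := Hc ord0; move/forallP/(_ (lift ord0 j)).
    rewrite fconsS fcons0 lift0 /= => H; move: Ha H; case: (nat_of_ord a) => //.
- case/andP => /andP[Ha Hab] /andP[/andP[/forallP Hp /forallP Hc] /forallP Hb].
  apply/andP; split; first (apply/andP; split).
  + apply/forallP => i; case: (unliftP ord0 i) => [j ->|->]; by rewrite ?fconsS ?fcons0.
  + apply/forallP => i; apply/forallP => j; apply/implyP.
    case: (unliftP ord0 i) => [i' ->|->]; case: (unliftP ord0 j) => [j' ->|->];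
      rewrite ?fconsS ?fcons0 ?lift0 //=.
    * by rewrite ltnS => ij; move/forallP: (Hc i') => /(_ j') /implyP; apply.
    * move=> _; have := Hb j'; move: Ha; case: (nat_of_ord a) => //.
  + apply/forallP => i; case: (unliftP ord0 i) => [j ->|->]; rewrite ?fconsS ?fcons0 //.
    apply: leq_trans (Hb j) _; apply: leq_trans Hab; exact: leq_pred.
Qed.

Lemma cond_weak r N b (a : 'I_N.+1) (g : {ffun 'I_r -> 'I_N.+1}) :
  [forall i, (0 < (fcons a g i : nat))%N] &&
  [forall i : 'I_r.+1, forall j : 'I_r.+1, ((i : nat) < j)%N ==> ((fcons a g j : nat) <= fcons a g i)%N] &&
  [forall i, ((fcons a g i : nat) <= b)%N]
  = ((0 < (a : nat))%N && (a <= b)%N) &&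
   ([forall i, (0 < (g i : nat))%N] &&
    [forall i : 'I_r, forall j : 'I_r, ((i : nat) < j)%N ==> ((g j : nat) <= g i)%N] &&
    [forall i, ((g i : nat) <= a)%N]).
Proof.
apply/idP/idP.
- case/andP => /andP[/forallP Hp /forallP Hc] /forallP Hb.
  have Ha := Hp ord0; rewrite fcons0 in Ha.
  have Hab := Hb ord0; rewrite fcons0 in Hab.
  rewrite Ha Hab /=; apply/andP; split; first (apply/andP; split).
  + by apply/forallP => j; have := Hp (lift ord0 j); rewrite fconsS.
  + apply/forallP => i; apply/forallP => j; apply/implyP => ij.
    have := Hc (lift ord0 i); move/forallP/(_ (lift ord0 j)).
    by rewrite !fconsS !lift0 ltnS ij.
  + apply/forallP => j; have := Hc ord0; move/forallP/(_ (lift ord0 j)).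
    by rewrite fconsS fcons0 lift0 /=.
- case/andP => /andP[Ha Hab] /andP[/andP[/forallP Hp /forallP Hc] /forallP Hb].
  apply/andP; split; first (apply/andP; split).
  + apply/forallP => i; case: (unliftP ord0 i) => [j ->|->]; by rewrite ?fconsS ?fcons0.
  + apply/forallP => i; apply/forallP => j; apply/implyP.
    case: (unliftP ord0 i) => [i' ->|->]; case: (unliftP ord0 j) => [j' ->|->];
      rewrite ?fconsS ?fcons0 ?lift0 //=.
    * by rewrite ltnS => ij; move/forallP: (Hc i') => /(_ j') /implyP; apply.
  + apply/forallP => i; case: (unliftP ord0 i) => [j ->|->]; rewrite ?fconsS ?fcons0 //.
    exact: leq_trans (Hb j) Hab.
Qed.
Lemma sum_ord_shift {R : numFieldType} N b (G : nat -> R) : (b <= N)%N ->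
  \sum_(a < N.+1) (if (0 < (a : nat))%N && ((a : nat) <= b)%N then G a else 0)
  = \sum_(0 <= a < b) G a.+1.
Proof.
move=> bN.
rewrite -(big_mkord xpredT (fun a => if (0 < a)%N && (a <= b)%N then G a else 0)).
rewrite big_nat_recl //= add0r (big_nat_widen 0 b N) //.
by rewrite [RHS]big_mkcond.
Qed.

Lemma bridge_zs {R : numFieldType} N s r : forall (F : nat -> nat -> R) b, (b <= N)%N ->
  \sum_(m : {ffun 'I_r -> 'I_N.+1} | [forall i, (0 < (m i : nat))%N] &&
    [forall i : 'I_r, forall j : 'I_r, ((i : nat) < j)%N ==> ((m j : nat) < m i)%N] &&
    [forall i, ((m i : nat) <= b)%N])
    \prod_(i < r) F i (m i + s)%N = zs s b r F.
Proof.
elim: r => [|r IH] F b bN.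
  rewrite (big_pred1 [ffun=> ord0]) ?big_ord0 // => m /=.
  have -> : m = [ffun=> ord0] by apply/ffunP => -[].
  rewrite eqxx; apply/andP; split; first (apply/andP; split); by apply/forallP => -[].
rewrite big_mkcond sum_ffunS.
rewrite (eq_bigr (fun a : 'I_N.+1 => if (0 < (a:nat))%N && ((a:nat) <= b)%N
    then F 0%N (a + s)%N * zs s (a : nat).-1 r (fun i => F i.+1) else 0)); last first.
  move=> a _; case: (boolP ((0 < (a:nat))%N && ((a:nat) <= b)%N)) => Ha /=.
  - rewrite -(IH (fun i => F i.+1) (a : nat).-1); last first.
      exact: leq_trans (leq_pred _) (leq_ord a).
    rewrite mulr_sumr [RHS]big_mkcond; apply: eq_bigr => g _.
    rewrite cond_strict Ha /=; case: ifP => _; rewrite ?mulr0 // big_ord_recl fcons0.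
    congr (_ * _); apply: eq_bigr => i _; by rewrite fconsS lift0.
  - by rewrite big1 // => g _; rewrite cond_strict (negbTE Ha).
rewrite (@sum_ord_shift R N b (fun a => F 0%N (a + s)%N * zs s a.-1 r (fun i => F i.+1)) bN).
by rewrite zsS.
Qed.
Lemma bridge_zss {R : numFieldType} N r : forall (F : nat -> nat -> R) b, (b <= N)%N ->
  \sum_(m : {ffun 'I_r -> 'I_N.+1} | [forall i, (0 < (m i : nat))%N] &&
    [forall i : 'I_r, forall j : 'I_r, ((i : nat) < j)%N ==> ((m j : nat) <= m i)%N] &&
    [forall i, ((m i : nat) <= b)%N])
    \prod_(i < r) F i (m i : nat) = zss b r F.
Proof.
elim: r => [|r IH] F b bN.
  rewrite (big_pred1 [ffun=> ord0]) ?big_ord0 // => m /=.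
  have -> : m = [ffun=> ord0] by apply/ffunP => -[].
  rewrite eqxx; apply/andP; split; first (apply/andP; split); by apply/forallP => -[].
rewrite big_mkcond sum_ffunS.
rewrite (eq_bigr (fun a : 'I_N.+1 => if (0 < (a:nat))%N && ((a:nat) <= b)%N
    then F 0%N a * zss a r (fun i => F i.+1) else 0)); last first.
  move=> a _; case: (boolP ((0 < (a:nat))%N && ((a:nat) <= b)%N)) => Ha /=.
  - rewrite -(IH (fun i => F i.+1) (a : nat)); last exact: leq_ord a.
    rewrite mulr_sumr [RHS]big_mkcond; apply: eq_bigr => g _.
    rewrite cond_weak Ha /=; case: ifP => _; rewrite ?mulr0 // big_ord_recl fcons0.
    congr (_ * _); apply: eq_bigr => i _; by rewrite fconsS lift0.
  - by rewrite big1 // => g _; rewrite cond_weak (negbTE Ha).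
rewrite (@sum_ord_shift R N b (fun a => F 0%N a * zss a r (fun i => F i.+1)) bN).
by rewrite zssS.
Qed.
Lemma zs_full {R : numFieldType} N s r (F : nat -> nat -> R) :
  \sum_(m : {ffun 'I_r -> 'I_N.+1} | [forall i, (0 < (m i : nat))%N] &&
    [forall i : 'I_r, forall j : 'I_r, ((i : nat) < j)%N ==> ((m j : nat) < m i)%N])
    \prod_(i < r) F i (m i + s)%N = zs s N r F.
Proof.
rewrite -(@bridge_zs R N s r F N (leqnn N)); apply: eq_bigl => m.
rewrite (_ : [forall i, ((m i : nat) <= N)%N] = true) ?andbT //.
by apply/forallP => i; exact: leq_ord.
Qed.

Lemma zs0_full {R : numFieldType} N r (F : nat -> nat -> R) :
  \sum_(m : {ffun 'I_r -> 'I_N.+1} | [forall i, (0 < (m i : nat))%N] &&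
    [forall i : 'I_r, forall j : 'I_r, ((i : nat) < j)%N ==> ((m j : nat) < m i)%N])
    \prod_(i < r) F i (m i : nat) = zs 0 N r F.
Proof.
rewrite -zs_full; apply: eq_bigr => m _; apply: eq_bigr => i _; by rewrite addn0.
Qed.

Lemma zss_full {R : numFieldType} N r (F : nat -> nat -> R) :
  \sum_(m : {ffun 'I_r -> 'I_N.+1} | [forall i, (0 < (m i : nat))%N] &&
    [forall i : 'I_r, forall j : 'I_r, ((i : nat) < j)%N ==> ((m j : nat) <= m i)%N])
    \prod_(i < r) F i (m i : nat) = zss N r F.
Proof.
rewrite -(@bridge_zss R N r F N (leqnn N)); apply: eq_bigl => m.
rewrite (_ : [forall i, ((m i : nat) <= N)%N] = true) ?andbT //.
by apply/forallP => i; exact: leq_ord.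
Qed.

Theorem mainTheorem12 (R : numFieldType) (k : seq nat) (x : seq R) (l n : nat)
    (hsize : size x = size k)
    (hk : all (fun a => (0 < a)%N) k)
    (hx : all (fun y => `|y| <= 1) x)
    (hn : (0 < n)%N) :
  \sum_(m : {ffun 'I_(size k) -> 'I_n.+1} |
          [forall i, (0 < (m i : nat))%N] &&
          [forall i : 'I_(size k), forall j : 'I_(size k), ((i : nat) < j)%N ==> ((m j : nat) < m i)%N])
    \prod_(i < size k)
       ((nth 0 x i) ^+ (m i + l) / (((m i : nat) + l)%:R ^+ nth 0%N k i))
  = (-1) ^+ size k *
    \sum_(j < (size k).+1)
      (-1) ^+ j * mzeta (n + l) (take j k) (take j x)
                * mzetaStar l (rev (drop j k)) (rev (drop j x)).
Proof.
pose G := fun (i v : nat) => (nth 0 x i) ^+ v / (v%:R ^+ nth 0%N k i).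
rewrite (@zs_full R n l (size k) G).
rewrite (eq_bigr (fun j : 'I_(size k).+1 => (-1) ^+ j * zs 0 (n + l) j G *
   zss l (size k - j) (fun i => G (size k - i.+1)%N))); last first.
  move=> j _; have jk : (j <= size k)%N by rewrite -ltnS.
  rewrite /mzeta /mzetaStar.
  rewrite (@zs0_full R _ _ (fun i v => (nth 0 (take j x) i) ^+ v / (v%:R ^+ nth 0%N (take j k) i))).
  rewrite (@zss_full R _ _ (fun i v => (nth 0 (rev (drop j x)) i) ^+ v /
                                     (v%:R ^+ nth 0%N (rev (drop j k)) i))).
  rewrite size_takel // size_rev size_drop.
  congr (_ * _ * _).
  - apply: zs_ext => i v Hi /=; rewrite /G !nth_take //.
  - apply: zss_ext => i v Hi /=; rewrite /G !nth_rev ?size_drop ?hsize // !nth_drop.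
    by rewrite (_ : (j + (size k - j - i.+1) = size k - i.+1)%N) //; lia.
rewrite (@main_fun R (size k) G (n + l) l) ?leq_addl // addnK.
by rewrite mulrA -exprD addnn -mul2n exprM expr2 mulrNN mulr1 expr1n mul1r.
Qed.
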